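(* Let $\mathbb X,\mathbb Y$ be Euclidean spaces, $\varphi\colon\mathbb X\to\mathbb R$ locally Lipschitz, $\Phi\colon\mathbb X\rightrightarrows\mathbb Y$ with closed graph, $\bar y\in\operatorname{Im}\Phi$, and let $\bar x$ be a local minimizer of (P): $\min\{\varphi(x)\mid\bar y\in\Phi(x)\}$ such that, for each critical direction $u\in\mathbb S_{\mathbb X}$ for (P) at $\bar x$, $\Phi$ is asymptotically regular at $(\bar x,\bar y)$ in direction $u$. Then $\bar x$ is M-stationary, i.e., $0\in\partial\varphi(\bar x)+D^*\Phi(\bar x,\bar y)(\lambda)$ for some $\lambda\in\mathbb Y$.
   Context: $\partial$ is the limiting subdifferential; $D^*\Phi(x,y)(y^* )=\{x^*\mid(x^*,-y^* )\in\mathcal N_{\operatorname{gph}\Phi}(x,y)\}$ (limiting coderivative), $\widehat D^*$ the same with the regular normal cone. $u$ is a critical direction for (P) at $\bar x$ if there are $u_k\to u$, $\alpha_k\to0$, $v_k\to0$, $t_k\downarrow0$ with $\varphi(\bar x+t_ku_k)\le\varphi(\bar x)+t_k\|u_k\|\alpha_k$ and $\bar y+t_k\|u_k\|v_k\in\Phi(\bar x+t_ku_k)$. $\Phi$ is asymptotically regular at $(\bar x,\bar y)$ in direction $u\in\mathbb S_{\mathbb X}$ if for all sequences $(x_k,y_k)\in\operatorname{gph}\Phi$, $x_k^*$, $\lambda_k$ and $x^*$, $y^*$ with $x_k\notin\Phi^{-1}(\bar y)$, $y_k\ne\bar y$, $x_k^*\in\widehat D^*\Phi(x_k,y_k)(\lambda_k)$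 for all $k$ and $x_k\to\bar x$, $y_k\to\bar y$, $x_k^*\to x^*$, $\frac{x_k-\bar x}{\|x_k-\bar x\|}\to u$, $\frac{y_k-\bar y}{\|x_k-\bar x\|}\to0$, $\frac{\|y_k-\bar y\|}{\|x_k-\bar x\|}\lambda_k\to y^*$, $\|\lambda_k\|\to\infty$, $\frac{y_k-\bar y}{\|y_k-\bar y\|}-\frac{\lambda_k}{\|\lambda_k\|}\to0$, one has $x^*\in\operatorname{Im}D^*\Phi(\bar x,\bar y)=\bigcup_{\lambda}D^*\Phi(\bar x,\bar y)(\lambda)$. *)

(* Defs.v *)
(* X = 'rV[R]_n, Y = 'rV[R]_m with the
   Euclidean inner product and Euclidean norm. *)
From HB Require Import structures.
From mathcomp Require Import all_boot all_order all_algebra.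
From mathcomp Require Import all_classical all_reals all_analysis.
Set Implicit Arguments. Unset Strict Implicit. Unset Printing Implicit Defensive.
Import Order.TTheory GRing.Theory Num.Theory.
Import numFieldNormedType.Exports.
Local Open Scope classical_set_scope.
Local Open Scope ring_scope.

Section EuclDefs.
Variable R : realType.

Definition edot {n : nat} (u v : 'rV[R]_n) : R := (u *m v^T) 0 0.
Definition enorm {n : nat} (u : 'rV[R]_n) : R := Num.sqrt (edot u u).
Definition pnorm {n m : nat} (a : 'rV[R]_n) (b : 'rV[R]_m) : R :=
  Num.sqrt (edot a a + edot b b).

(* set-valued map Phi : X => Y, given by its graph relation (Phi x y <-> y \in Phi(x)) *)
Definition gph {n m : nat} (Phi : 'rV[R]_n -> 'rV[R]_m -> Prop)
  : set ('rV[R]_n * 'rV[R]_m) := [set p | Phi p.1 p.2].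

Definition closed_graph {n m : nat} (Phi : 'rV[R]_n -> 'rV[R]_m -> Prop) : Prop :=
  closed (gph Phi).

Definition locally_lipschitz {n : nat} (phi : 'rV[R]_n -> R) : Prop :=
  forall x, exists L : R, exists2 d : R, 0 < d &
    forall y z, enorm (y - x) < d -> enorm (z - x) < d ->
      `|phi y - phi z| <= L * enorm (y - z).

Definition reg_normal_gph {n m : nat} (Phi : 'rV[R]_n -> 'rV[R]_m -> Prop)
  (x : 'rV[R]_n) (y : 'rV[R]_m) (xs : 'rV[R]_n) (ys : 'rV[R]_m) : Prop :=
  Phi x y /\
  forall e : R, 0 < e -> exists2 d : R, 0 < d &
    forall x' y', Phi x' y' -> pnorm (x' - x) (y' - y) < d ->
      edot xs (x' - x) + edot ys (y' - y) <= e * pnorm (x' - x) (y' - y).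

Definition lim_normal_gph {n m : nat} (Phi : 'rV[R]_n -> 'rV[R]_m -> Prop)
  (x : 'rV[R]_n) (y : 'rV[R]_m) (xs : 'rV[R]_n) (ys : 'rV[R]_m) : Prop :=
  exists (xk : nat -> 'rV[R]_n) (yk : nat -> 'rV[R]_m)
         (xsk : nat -> 'rV[R]_n) (ysk : nat -> 'rV[R]_m),
    [/\ xk @ \oo --> x, yk @ \oo --> y, xsk @ \oo --> xs, ysk @ \oo --> ys &
        forall k, reg_normal_gph Phi (xk k) (yk k) (xsk k) (ysk k)].

(* regular coderivative: xs \in \hat D^* Phi(x,y)(ys) *)
Definition reg_coderiv {n m : nat} (Phi : 'rV[R]_n -> 'rV[R]_m -> Prop)
  (x : 'rV[R]_n) (y : 'rV[R]_m) (ys : 'rV[R]_m) (xs : 'rV[R]_n) : Prop :=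
  reg_normal_gph Phi x y xs (- ys).

(* limiting coderivative: xs \in D^* Phi(x,y)(ys) *)
Definition lim_coderiv {n m : nat} (Phi : 'rV[R]_n -> 'rV[R]_m -> Prop)
  (x : 'rV[R]_n) (y : 'rV[R]_m) (ys : 'rV[R]_m) (xs : 'rV[R]_n) : Prop :=
  lim_normal_gph Phi x y xs (- ys).

Definition reg_subdiff {n : nat} (phi : 'rV[R]_n -> R) (x v : 'rV[R]_n) : Prop :=
  forall e : R, 0 < e -> exists2 d : R, 0 < d &
    forall x', enorm (x' - x) < d ->
      phi x' - phi x - edot v (x' - x) >= - (e * enorm (x' - x)).

Definition lim_subdiff {n : nat} (phi : 'rV[R]_n -> R) (x v : 'rV[R]_n) : Prop :=
  exists (xk vk : nat -> 'rV[R]_n),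
    [/\ xk @ \oo --> x, (fun k => phi (xk k)) @ \oo --> phi x,
        vk @ \oo --> v & forall k, reg_subdiff phi (xk k) (vk k)].

Definition local_min_P {n m : nat} (phi : 'rV[R]_n -> R)
  (Phi : 'rV[R]_n -> 'rV[R]_m -> Prop) (ybar : 'rV[R]_m) (xbar : 'rV[R]_n) : Prop :=
  Phi xbar ybar /\ exists2 d : R, 0 < d &
    forall x, Phi x ybar -> enorm (x - xbar) < d -> phi xbar <= phi x.

Definition critical_direction {n m : nat} (phi : 'rV[R]_n -> R)
  (Phi : 'rV[R]_n -> 'rV[R]_m -> Prop) (xbar : 'rV[R]_n) (ybar : 'rV[R]_m)
  (u : 'rV[R]_n) : Prop :=
  exists (uk : nat -> 'rV[R]_n) (ak : nat -> R) (vk : nat -> 'rV[R]_m) (tk : nat -> R),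
    [/\ uk @ \oo --> u, ak @ \oo --> 0, vk @ \oo --> (0 : 'rV[R]_m) &
        (tk @ \oo --> 0 /\ forall k, 0 < tk k)] /\
    (forall k, phi (xbar + tk k *: uk k)
                   <= phi xbar + tk k * enorm (uk k) * ak k) /\
    (forall k, Phi (xbar + tk k *: uk k) (ybar + (tk k * enorm (uk k)) *: vk k)).

Definition asymp_regular {n m : nat} (Phi : 'rV[R]_n -> 'rV[R]_m -> Prop)
  (xbar : 'rV[R]_n) (ybar : 'rV[R]_m) (u : 'rV[R]_n) : Prop :=
  forall (xk : nat -> 'rV[R]_n) (yk : nat -> 'rV[R]_m) (xsk : nat -> 'rV[R]_n)
         (lk : nat -> 'rV[R]_m) (xs : 'rV[R]_n) (ys : 'rV[R]_m),
    (forall k, Phi (xk k) (yk k)) ->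
    (forall k, ~ Phi (xk k) ybar) ->
    (forall k, yk k <> ybar) ->
    (forall k, reg_coderiv Phi (xk k) (yk k) (lk k) (xsk k)) ->
    xk @ \oo --> xbar ->
    yk @ \oo --> ybar ->
    xsk @ \oo --> xs ->
    (fun k => (enorm (xk k - xbar))^-1 *: (xk k - xbar)) @ \oo --> u ->
    (fun k => (enorm (xk k - xbar))^-1 *: (yk k - ybar)) @ \oo --> (0 : 'rV[R]_m) ->
    (fun k => (enorm (yk k - ybar) / enorm (xk k - xbar)) *: lk k) @ \oo --> ys ->
    (fun k => enorm (lk k)) @ \oo --> +oo ->
    (fun k => (enorm (yk k - ybar))^-1 *: (yk k - ybar)
              - (enorm (lk k))^-1 *: lk k) @ \oo --> (0 : 'rV[R]_m) ->
    exists lam : 'rV[R]_m, lim_coderiv Phi xbar ybar lam xs.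

End EuclDefs.

(* Main.v *)
Require Import Defs.
From HB Require Import structures.
From mathcomp Require Import all_boot all_order all_algebra.
From mathcomp Require Import all_classical all_reals all_analysis.
Import Order.TTheory GRing.Theory Num.Theory.
Import numFieldNormedType.Exports.
Local Open Scope classical_set_scope.
Local Open Scope ring_scope.
From mathcomp Require Import ring lra.
Set Implicit Arguments. Unset Strict Implicit. Unset Printing Implicit Defensive.

Lemma evP (P : nat -> Prop) :
  (\forall k \near \oo, P k) <-> exists N, forall k, (N <= k)%N -> P k.
Proof.
split.
- by case=> N _ H; exists N => k Hk; apply: H.
- by case=> N H; exists N => // k /= Hk; apply: H.
Qed.

Lemma edotE (R : realType) n (u v : 'rV[R]_n) : edot u v = \sum_i u 0 i * v 0 i.
Proof. by rewrite /edot mxE; apply: eq_bigr => i _; rewrite mxE. Qed.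

Lemma edotC (R : realType) n (u v : 'rV[R]_n) : edot u v = edot v u.
Proof. by rewrite !edotE; apply: eq_bigr => i _; rewrite mulrC. Qed.

Lemma edotDl (R : realType) n (u v w : 'rV[R]_n) : edot (u + v) w = edot u w + edot v w.
Proof. by rewrite !edotE -big_split; apply: eq_bigr => i _; rewrite mxE mulrDl. Qed.

Lemma edotZl (R : realType) n a (u w : 'rV[R]_n) : edot (a *: u) w = a * edot u w.
Proof. by rewrite !edotE mulr_sumr; apply: eq_bigr => i _; rewrite mxE mulrA. Qed.

Lemma edotNl (R : realType) n (u w : 'rV[R]_n) : edot (- u) w = - edot u w.
Proof. by rewrite -scaleN1r edotZl mulN1r. Qed.

Lemma edotBl (R : realType) n (u v w : 'rV[R]_n) : edot (u - v) w = edot u w - edot v w.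
Proof. by rewrite edotDl edotNl. Qed.

Lemma edotDr (R : realType) n (u v w : 'rV[R]_n) : edot w (u + v) = edot w u + edot w v.
Proof. by rewrite edotC edotDl !(edotC w). Qed.
Lemma edotZr (R : realType) n a (u w : 'rV[R]_n) : edot w (a *: u) = a * edot w u.
Proof. by rewrite edotC edotZl edotC. Qed.
Lemma edotNr (R : realType) n (u w : 'rV[R]_n) : edot w (- u) = - edot w u.
Proof. by rewrite edotC edotNl edotC. Qed.
Lemma edotBr (R : realType) n (u v w : 'rV[R]_n) : edot w (u - v) = edot w u - edot w v.
Proof. by rewrite edotDr edotNr. Qed.
Lemma edot0l (R : realType) n (w : 'rV[R]_n) : edot 0 w = 0.
Proof. by rewrite -(scale0r 0) edotZl mul0r. Qed.

Lemma edot_ge0 (R : realType) n (u : 'rV[R]_n) : 0 <= edot u u.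
Proof. by rewrite edotE; apply: sumr_ge0 => i _; rewrite -expr2 sqr_ge0. Qed.

Lemma edot_eq0 (R : realType) n (u : 'rV[R]_n) : edot u u = 0 -> u = 0.
Proof.
rewrite edotE => /eqP; rewrite psumr_eq0; last by move=> i _; rewrite -expr2 sqr_ge0.
move=> /allP H; apply/rowP => i; rewrite mxE.
by have := H i (mem_index_enum _); rewrite -expr2 sqrf_eq0 => /eqP.
Qed.

Lemma edot_sq (R : realType) n (u v : 'rV[R]_n) :
  edot (u - v) (u - v) = edot u u - 2 * edot u v + edot v v.
Proof. rewrite !edotBl !edotBr (edotC v u); ring. Qed.

Lemma edot_sqD (R : realType) n (u v : 'rV[R]_n) :
  edot (u + v) (u + v) = edot u u + 2 * edot u v + edot v v.
Proof. rewrite !edotDl !edotDr (edotC v u); ring. Qed.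

Lemma CS (R : realType) n (u v : 'rV[R]_n) : edot u v ^+ 2 <= edot u u * edot v v.
Proof.
have [v0|vn0] := eqVneq (edot v v) 0.
  by rewrite (edot_eq0 v0) edotC edot0l expr0n /= edot0l mulr0.
have vp : 0 < edot v v by rewrite lt_neqAle eq_sym vn0 edot_ge0.
have := edot_ge0 (u - (edot u v / edot v v) *: v).
rewrite edot_sq edotZr edotZl edotZr => H.
have : 0 <= edot v v * (edot u u - 2 * (edot u v / edot v v * edot u v) +
        edot u v / edot v v * (edot u v / edot v v * edot v v)) by apply: mulr_ge0 => //; exact: ltW.
have -> : edot v v * (edot u u - 2 * (edot u v / edot v v * edot u v) +
        edot u v / edot v v * (edot u v / edot v v * edot v v)) =
        edot u u * edot v v - edot u v ^+ 2 by field; exact: vn0.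
by rewrite subr_ge0.
Qed.

Lemma enorm_ge0 (R : realType) n (u : 'rV[R]_n) : 0 <= enorm u.
Proof. exact: sqrtr_ge0. Qed.

Lemma enorm_sq (R : realType) n (u : 'rV[R]_n) : enorm u ^+ 2 = edot u u.
Proof. by rewrite /enorm sqr_sqrtr // edot_ge0. Qed.

Lemma enorm_eq0 (R : realType) n (u : 'rV[R]_n) : enorm u = 0 -> u = 0.
Proof. by move=> H; apply: edot_eq0; rewrite -enorm_sq H expr0n. Qed.

Lemma enorm0 (R : realType) n : enorm (0 : 'rV[R]_n) = 0.
Proof. by rewrite /enorm edot0l sqrtr0. Qed.

Lemma enormZ (R : realType) n a (u : 'rV[R]_n) : enorm (a *: u) = `|a| * enorm u.
Proof. by rewrite /enorm edotZl edotZr mulrA -expr2 sqrtrM ?sqr_ge0 // sqrtr_sqr. Qed.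

Lemma enormN (R : realType) n (u : 'rV[R]_n) : enorm (- u) = enorm u.
Proof. by rewrite -scaleN1r enormZ normrN1 mul1r. Qed.

Lemma enormB (R : realType) n (u v : 'rV[R]_n) : enorm (u - v) = enorm (v - u).
Proof. by rewrite -enormN opprB. Qed.

Lemma dot_le (R : realType) n (u v : 'rV[R]_n) : edot u v <= enorm u * enorm v.
Proof.
have [H|H] := lerP (edot u v) 0.
  by apply: le_trans H _; apply: mulr_ge0; apply: enorm_ge0.
rewrite -ler_sqr ?nnegrE ?(ltW H) ?mulr_ge0 ?enorm_ge0 //.
by rewrite exprMn !enorm_sq CS.
Qed.

Lemma dot_abs (R : realType) n (u v : 'rV[R]_n) : `|edot u v| <= enorm u * enorm v.
Proof.
have [H|H] := lerP 0 (edot u v); first by rewrite ger0_norm // dot_le.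
by rewrite ltr0_norm // -edotNl -(enormN u) dot_le.
Qed.

Lemma enormD (R : realType) n (u v : 'rV[R]_n) : enorm (u + v) <= enorm u + enorm v.
Proof.
rewrite -ler_sqr ?nnegrE ?addr_ge0 ?enorm_ge0 //.
rewrite enorm_sq edot_sqD sqrrD !enorm_sq lerD2r lerD2l.
have := dot_le u v; lra.
Qed.

Lemma enormD3 (R : realType) n (u v w : 'rV[R]_n) : enorm (u - w) <= enorm (u - v) + enorm (v - w).
Proof. have -> : u - w = (u - v) + (v - w) by rewrite addrA subrK. exact: enormD. Qed.

Lemma coord_le_mx (R : realType) n (u : 'rV[R]_n) i : `|u 0 i| <= `|u|.
Proof.
rewrite [leRHS]/Num.Def.normr /= mx_normrE.
by apply: le_trans (le_bigmax _ _ (0, i)); rewrite /=.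
Qed.

Lemma coord_le_enorm (R : realType) n (u : 'rV[R]_n) i : `|u 0 i| <= enorm u.
Proof.
rewrite -ler_sqr ?nnegrE ?enorm_ge0 // enorm_sq edotE real_normK ?num_real //.
rewrite (bigD1 i) //= expr2 lerDl; apply: sumr_ge0 => j _; rewrite -expr2 sqr_ge0 //.
Qed.

Lemma mx_le_enorm (R : realType) n (u : 'rV[R]_n) : `|u| <= enorm u.
Proof.
rewrite [leLHS]/Num.Def.normr /= mx_normrE; apply: bigmax_le; first exact: enorm_ge0.
move=> [i j] _ /=; rewrite (ord1 i); exact: coord_le_enorm.
Qed.

Lemma enorm_le_mx (R : realType) n (u : 'rV[R]_n) : enorm u <= Num.sqrt n%:R * `|u|.
Proof.
rewrite /enorm -(ger0_norm (normr_ge0 u)) -sqrtr_sqr -sqrtrM ?ler0n //.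
rewrite ler_sqrt ?mulr_ge0 ?ler0n ?sqr_ge0 // edotE.
have -> : n%:R * `|u| ^+ 2 = \sum_(i < n) `|u| ^+ 2 by rewrite sumr_const card_ord mulr_natl.
apply: ler_sum => i _; rewrite -expr2 -real_normK ?num_real //.
rewrite ler_sqr ?nnegrE ?normr_ge0 //; exact: coord_le_mx.
Qed.

Definition cv (R : realType) p (z : nat -> 'rV[R]_p) c :=
  forall e, 0 < e -> exists N, forall k, (N <= k)%N -> enorm (z k - c) < e.
Definition cvr (R : realType) (f : nat -> R) c :=
  forall e, 0 < e -> exists N, forall k, (N <= k)%N -> `|f k - c| < e.

Lemma cvP (R : realType) p (z : nat -> 'rV[R]_p) c : cv z c <-> z @ \oo --> c.
Proof.
split.
- move=> H; apply/cvgrPdist_lt => e e0; have [N HN] := H e e0.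
  apply/evP; exists N => k /HN; rewrite enormB; apply: le_lt_trans; exact: mx_le_enorm.
- move=> /cvgrPdist_lt H e e0.
  have K0 : 0 < Num.sqrt (p%:R : R) + 1 by have := sqrtr_ge0 (p%:R : R); lra.
  have /evP [N HN] := H (e / (Num.sqrt p%:R + 1)) (divr_gt0 e0 K0).
  exists N => k Nk; have := HN k Nk; rewrite enormB => H1.
  apply: le_lt_trans (enorm_le_mx _) _.
  apply: (@le_lt_trans _ _ ((Num.sqrt p%:R + 1) * `|c - z k|)).
    by rewrite ler_wpM2r ?normr_ge0 // lerDl.
  by rewrite mulrC -ltr_pdivlMr.
Qed.

Lemma cvrP (R : realType) (f : nat -> R) c : cvr f c <-> f @ \oo --> c.
Proof.
split.
- move=> H; apply/cvgrPdist_lt => e e0; have [N HN] := H e e0.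
  by apply/evP; exists N => k /HN; rewrite distrC.
- move=> /cvgrPdist_lt H e e0; have /evP [N HN] := H e e0.
  by exists N => k /HN; rewrite distrC.
Qed.

Lemma cvyP (R : realType) (f : nat -> R) :
  (forall M, exists N, forall k, (N <= k)%N -> M < f k) <-> f @ \oo --> +oo.
Proof.
split.
- by move=> H; apply/cvgryPgt => M; apply/evP; exact: H.
- by move=> /cvgryPgt H M; apply/evP; exact: H.
Qed.

Definition incr (f : nat -> nat) := forall j, (f j < f j.+1)%N.

Lemma incr_lt f : incr f -> forall i j, (i < j)%N -> (f i < f j)%N.
Proof.
move=> H i j; elim: j => // j IH; rewrite ltnS leq_eqVlt => /orP [/eqP ->|/IH h]; first exact: H.
exact: ltn_trans h (H j).
Qed.

Lemma incr_ge f : incr f -> forall j, (j <= f j)%N.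
Proof. by move=> H; elim=> // j IH; apply: leq_ltn_trans IH (H j). Qed.

Lemma incr_comp f g : incr f -> incr g -> incr (fun j => f (g j)).
Proof. by move=> Hf Hg j; apply: incr_lt => //; exact: Hg. Qed.

Lemma extract (P : nat -> nat -> Prop) :
  (forall j N, exists k, (N <= k)%N /\ P j k) ->
  exists f : nat -> nat, incr f /\ forall j, P j (f j).
Proof.
move=> H.
have g : forall j N, {k | (N <= k)%N /\ P j k}.
  by move=> j N; apply: cid; exact: H.
pose f := fix f j := match j with 0 => sval (g 0%N 0%N) | j'.+1 => sval (g j'.+1 (f j').+1) end.
exists f; split.
- by move=> j /=; case: (svalP (g j.+1 (f j).+1)).
- by case=> [|j] /=; [case: (svalP (g 0%N 0%N))|case: (svalP (g j.+1 (f j).+1))].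
Qed.

Lemma BW (R : realType) p (z : nat -> 'rV[R]_p) M :
  (forall k, enorm (z k) <= M) -> exists f c, incr f /\ cv (fun j => z (f j)) c.
Proof.
move=> zM.
pose A := [set v : 'rV[R]_p | `|v| <= M].
have cA : compact A.
  apply: bounded_closed_compact.
    exists M; split; first exact: num_real.
    by move=> r Mr v Av; apply: le_trans Av (ltW Mr).
  have := @preimage_closed _ _ (fun v : 'rV[R]_p => `|v|) [set r : R | r <= M].
  apply; last exact: closed_le.
  by move=> x _; apply: norm_continuous.
have FA : (z @ \oo) A by apply/evP; exists 0%N => k _; apply: le_trans (mx_le_enorm _) (zM k).
have [c [Ac clc]] := cA _ _ FA.
have H : forall j N, exists k, (N <= k)%N /\ `|c - z k| < j.+1%:R^-1.
  move=> j N.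
  have FU : (z @ \oo) (z @` [set k | (N <= k)%N]).
    by apply/evP; exists N => k Nk; exists k.
  have NV : nbhs c (ball c (j.+1%:R^-1 : R)) by apply: nbhsx_ballx; rewrite invr_gt0.
  have [v [[k Nk <-] Bk]] := clc _ _ FU NV.
  by exists k; split => //; rewrite -ball_normE in Bk.
have [f [If Pf]] := extract H.
exists f, c; split => //; apply/cvP; apply/cvgrPdist_lt => e e0.
near=> j; apply: lt_trans (Pf j) _; near: j.
exact: (near_infty_natSinv_lt (PosNum e0)).
Unshelve. all: by end_near.
Qed.

Lemma cv_sub (R : realType) p (z : nat -> 'rV[R]_p) c f : cv z c -> incr f -> cv (fun j => z (f j)) c.
Proof.
move=> H If e e0; have [N HN] := H e e0; exists N => k Nk; apply: HN.
exact: leq_trans Nk (incr_ge If k).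
Qed.

Lemma cvr_sub (R : realType) (z : nat -> R) c f : cvr z c -> incr f -> cvr (fun j => z (f j)) c.
Proof.
move=> H If e e0; have [N HN] := H e e0; exists N => k Nk; apply: HN.
exact: leq_trans Nk (incr_ge If k).
Qed.

Lemma cvr_le (R : realType) (f : nat -> R) c g : cvr g 0 -> (forall k, `|f k - c| <= g k) -> cvr f c.
Proof.
move=> H Hb e e0; have [N HN] := H e e0; exists N => k Nk.
apply: le_lt_trans (Hb k) _; apply: le_lt_trans (HN k Nk); rewrite subr0; exact: ler_norm.
Qed.

Lemma cv_le (R : realType) p (z : nat -> 'rV[R]_p) c g : cvr g 0 -> (forall k, enorm (z k - c) <= g k) -> cv z c.
Proof.
move=> H Hb e e0; have [N HN] := H e e0; exists N => k Nk.
apply: le_lt_trans (Hb k) _; apply: le_lt_trans (HN k Nk); rewrite subr0; exact: ler_norm.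
Qed.

Lemma cv_cvr (R : realType) p (z : nat -> 'rV[R]_p) c : cv z c -> cvr (fun k => enorm (z k - c)) 0.
Proof.
move=> H e e0; have [N HN] := H e e0; exists N => k Nk.
by rewrite subr0 ger0_norm ?enorm_ge0 //; apply: HN.
Qed.

Lemma enorm_rev (R : realType) p (u v : 'rV[R]_p) : `|enorm u - enorm v| <= enorm (u - v).
Proof.
rewrite ler_norml; apply/andP; split.
- have := enormD3 v u 0; rewrite !subr0 (enormB v u); lra.
- have := enormD3 u v 0; rewrite !subr0; lra.
Qed.

Lemma cv_enorm (R : realType) p (z : nat -> 'rV[R]_p) c : cv z c -> cvr (fun k => enorm (z k)) (enorm c).
Proof.
move=> H e e0; have [N HN] := H e e0; exists N => k Nk.
apply: le_lt_trans (enorm_rev _ _) _; exact: HN.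
Qed.

Lemma cvr_le_lim (R : realType) (f : nat -> R) a b : cvr f a -> (forall k, f k <= b) -> a <= b.
Proof.
move=> H Hb; rewrite leNgt; apply/negP => ba.
have [N HN] := H (a - b) (ltac:(by rewrite subr_gt0)).
have := HN N (leqnn N); have := Hb N; rewrite ltr_norml; lra.
Qed.

Lemma cvr_ge_lim (R : realType) (f : nat -> R) a b : cvr f a -> (forall k, b <= f k) -> b <= a.
Proof.
move=> H Hb; rewrite leNgt; apply/negP => ba.
have [N HN] := H (b - a) (ltac:(by rewrite subr_gt0)).
have := HN N (leqnn N); have := Hb N; rewrite ltr_norml; lra.
Qed.

Lemma cv_const (R : realType) p (c : 'rV[R]_p) : cv (fun _ => c) c.
Proof. by move=> e e0; exists 0%N => k _; rewrite subrr enorm0. Qed.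

Lemma cvr_const (R : realType) (c : R) : cvr (fun _ => c) c.
Proof. by move=> e e0; exists 0%N => k _; rewrite subrr normr0. Qed.

Lemma cvD (R : realType) p (z w : nat -> 'rV[R]_p) a b : cv z a -> cv w b -> cv (fun k => z k + w k) (a + b).
Proof. by move=> /cvP H1 /cvP H2; apply/cvP; apply: cvgD. Qed.

Lemma cvN (R : realType) p (z : nat -> 'rV[R]_p) a : cv z a -> cv (fun k => - z k) (- a).
Proof. by move=> /cvP H1; apply/cvP; apply: cvgN. Qed.

Lemma cvZ (R : realType) p (z : nat -> 'rV[R]_p) a (r : R) : cv z a -> cv (fun k => r *: z k) (r *: a).
Proof. by move=> /cvP H1; apply/cvP; apply: cvgZr. Qed.

Lemma cvrD (R : realType) (z w : nat -> R) a b : cvr z a -> cvr w b -> cvr (fun k => z k + w k) (a + b).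
Proof. by move=> /cvrP H1 /cvrP H2; apply/cvrP; apply: cvgD. Qed.

Lemma cvrM (R : realType) (z w : nat -> R) a b : cvr z a -> cvr w b -> cvr (fun k => z k * w k) (a * b).
Proof. by move=> /cvrP H1 /cvrP H2; apply/cvrP; apply: cvgM. Qed.

Lemma cvr_inv (R : realType) (g : nat -> R) :
  (forall M, exists N, forall k, (N <= k)%N -> M < g k) -> cvr (fun k => (g k)^-1) 0.
Proof.
move=> H e e0; have [N HN] := H e^-1; exists N => k Nk.
have := HN k Nk => h.
have g0 : 0 < g k by apply: lt_trans h; rewrite invr_gt0.
rewrite subr0 gtr0_norm ?invr_gt0 //.
by rewrite -(invrK e) ltf_pV2 ?posrE ?invr_gt0.
Qed.

Lemma cvr_natinv (R : realType) f K : incr f -> cvr (fun j => K / ((f j).+1%:R : R)) 0.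
Proof.
move=> If; rewrite -(mulr0 K); apply: cvrM; first exact: cvr_const.
apply: (@cvr_sub R (fun k => (k.+1%:R : R)^-1)) If; apply/cvrP.
apply/cvgrPdist_lt => e e0; near=> j; rewrite sub0r normrN ger0_norm ?invr_ge0 ?ler0n //.
near: j; exact: (near_infty_natSinv_lt (PosNum e0)).
Unshelve. all: by end_near.
Qed.

Lemma closed_seq (R : realType) n m (Phi : 'rV[R]_n -> 'rV[R]_m -> Prop) (x : nat -> 'rV[R]_n) (y : nat -> 'rV[R]_m) a b :
  closed_graph Phi -> (forall k, Phi (x k) (y k)) -> cv x a -> cv y b -> Phi a b.
Proof.
move=> Hc Hk /cvP Hx /cvP Hy.
have Hev : \forall k \near \oo, gph Phi (x k, y k) by apply/evP; exists 0%N => k _; exact: Hk.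
have := @closed_cvg nat _ \oo _ (fun k => (x k, y k)) (gph Phi) Hc Hev (a, b).
by apply; exact: (cvg_pair Hx Hy).
Qed.

Lemma exist_min (R : realType) n m (G : 'rV[R]_n -> 'rV[R]_n -> 'rV[R]_m -> R)
  (K : 'rV[R]_n -> 'rV[R]_n -> 'rV[R]_m -> Prop) B lb a0 b0 c0 :
  K a0 b0 c0 ->
  (forall a b c, K a b c -> [/\ enorm a <= B, enorm b <= B & enorm c <= B]) ->
  (forall a b c, K a b c -> lb <= G a b c) ->
  (forall xa xb xc a b c, (forall k, K (xa k) (xb k) (xc k)) -> cv xa a -> cv xb b -> cv xc c ->
     K a b c /\ cvr (fun k => G (xa k) (xb k) (xc k)) (G a b c)) ->
  exists a b c, K a b c /\ forall a' b' c', K a' b' c' -> G a b c <= G a' b' c'.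
Proof.
move=> K0 KB Glb Kcl.
pose S := [set r | exists a b c, K a b c /\ r = G a b c].
have hS : has_inf S.
  split; first by exists (G a0 b0 c0), a0, b0, c0.
  by exists lb => r [a [b [c [Kabc ->]]]]; apply: Glb.
have Hq : forall j : nat, exists q : 'rV[R]_n * 'rV[R]_n * 'rV[R]_m,
    K q.1.1 q.1.2 q.2 /\ G q.1.1 q.1.2 q.2 < inf S + (j.+1%:R)^-1.
  move=> j; have [r [a [b [c [Kabc ->]]]] Hr] := inf_adherent (ltac:(by rewrite invr_gt0 ltr0n) : 0 < (j.+1%:R : R)^-1) hS.
  by exists (a, b, c).
pose q := fun j => sval (cid (Hq j)).
have Kq : forall j, K (q j).1.1 (q j).1.2 (q j).2 by move=> j; case: (svalP (cid (Hq j))).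
have Gq : forall j, G (q j).1.1 (q j).1.2 (q j).2 < inf S + (j.+1%:R)^-1.
  by move=> j; case: (svalP (cid (Hq j))).
have B1 : forall j, enorm (q j).1.1 <= B by move=> j; case: (KB _ _ _ (Kq j)).
have B2 : forall j, enorm (q j).1.2 <= B by move=> j; case: (KB _ _ _ (Kq j)).
have B3 : forall j, enorm (q j).2 <= B by move=> j; case: (KB _ _ _ (Kq j)).
have [f1 [a [If1 Ha]]] := BW B1.
have [f2 [b [If2 Hb]]] := BW (fun j => B2 (f1 j)).
have [f3 [c [If3 Hc]]] := BW (fun j => B3 (f1 (f2 j))).
pose g := fun j => f1 (f2 (f3 j)).
have Ig : incr g by apply: incr_comp => //; apply: incr_comp.
have [Kabc HG] := Kcl (fun j => (q (g j)).1.1) (fun j => (q (g j)).1.2) (fun j => (q (g j)).2) a b c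
  (fun j => Kq (g j)) (cv_sub (cv_sub Ha If2) If3) (cv_sub Hb If3) Hc.
exists a, b, c; split => // a' b' c' Kabc'.
have H1 : G a b c <= inf S.
  have := cvrD HG (cvrM (cvr_const (-1)) (cvr_natinv 1 Ig)).
  rewrite mulr0 addr0 => H2; apply: (cvr_le_lim H2) => k.
  by rewrite mulN1r div1r lerBlDr; apply: ltW; exact: Gq.
apply: le_trans H1 _; apply: ge_inf; first by case: hS.
by exists a', b', c'.
Qed.

Lemma pnorm_sq (R : realType) n m (a : 'rV[R]_n) (b : 'rV[R]_m) : pnorm a b ^+ 2 = edot a a + edot b b.
Proof. by rewrite /pnorm sqr_sqrtr // addr_ge0 ?edot_ge0. Qed.

Lemma pnorm_ge0 (R : realType) n m (a : 'rV[R]_n) (b : 'rV[R]_m) : 0 <= pnorm a b.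
Proof. exact: sqrtr_ge0. Qed.

Lemma L1 (R : realType) n (phi : 'rV[R]_n -> R) (xbar X x' : 'rV[R]_n) (c r : R) :
  0 < c -> 0 < r ->
  (forall z, enorm (z - x') < r ->
     phi x' + c * edot (X - x') (X - x') + edot (x' - xbar) (x' - xbar)
     <= phi z + c * edot (X - z) (X - z) + edot (z - xbar) (z - xbar)) ->
  reg_subdiff phi x' ((2 * c) *: (X - x') - 2 *: (x' - xbar)).
Proof.
move=> c0 r0 H e e0.
have ce : 0 < e / (c + 1) by apply: divr_gt0 => //; lra.
exists (Order.min r (e / (c + 1))); first by rewrite lt_min r0.
move=> z; rewrite lt_min => /andP [hr he].
have := H z hr.
have -> : X - z = (X - x') - (z - x') by rewrite opprB addrA (subrK x').
have -> : z - xbar = (x' - xbar) + (z - x') by rewrite [RHS]addrC addrA (subrK x').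
set h := z - x'.
rewrite (edot_sq (X - x') h) (edot_sqD (x' - xbar) h) (edotBl ((2 * c) *: (X - x'))) !edotZl.
set A := edot (X - x') (X - x'); set B := edot (x' - xbar) (x' - xbar).
set Ah := edot (X - x') h; set Bh := edot (x' - xbar) h.
have hh : edot h h = enorm h ^+ 2 by rewrite enorm_sq.
rewrite hh => Hin.
have nh0 := enorm_ge0 h.
have H1 : (c + 1) * enorm h <= e.
  by rewrite mulrC -ler_pdivlMr; [apply: ltW | lra].
have H2 : (c + 1) * enorm h ^+ 2 <= e * enorm h.
  by rewrite expr2 mulrA ler_wpM2r.
move: Hin H2; set t := enorm h ^+ 2.
have -> : c * (A - 2 * Ah + t) = c * A - 2 * (c * Ah) + c * t by ring.
have -> : 2 * c * Ah = 2 * (c * Ah) by ring.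
have -> : (c + 1) * t = c * t + t by ring.
lra.
Qed.

Lemma L2 (R : realType) n m (Phi : 'rV[R]_n -> 'rV[R]_m -> Prop) (x' X : 'rV[R]_n) (ybar Y : 'rV[R]_m) (c r : R) :
  0 < c -> 0 < r -> Phi X Y ->
  (forall a b, Phi a b -> pnorm (a - X) (b - Y) < r ->
     c * edot (X - x') (X - x') + c * edot (Y - ybar) (Y - ybar)
     <= c * edot (a - x') (a - x') + c * edot (b - ybar) (b - ybar)) ->
  reg_normal_gph Phi X Y (- ((2 * c) *: (X - x'))) (- ((2 * c) *: (Y - ybar))).
Proof.
move=> c0 r0 PXY H; split => // e e0.
have ce : 0 < e / c by apply: divr_gt0.
exists (Order.min r (e / c)); first by rewrite lt_min r0.
move=> a b Pab; rewrite lt_min => /andP [hr he].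
have := H a b Pab hr.
have -> : a - x' = (X - x') + (a - X) by rewrite [RHS]addrC addrA (subrK X).
have -> : b - ybar = (Y - ybar) + (b - Y) by rewrite [RHS]addrC addrA (subrK Y).
rewrite (edot_sqD (X - x') (a - X)) (edot_sqD (Y - ybar) (b - Y)) (edotNl ((2 * c) *: (X - x'))) (edotNl ((2 * c) *: (Y - ybar))) !edotZl.
have hp := pnorm_sq (a - X) (b - Y).
have p0 := pnorm_ge0 (a - X) (b - Y).
set p := pnorm (a - X) (b - Y) in hp p0 he *.
set A := edot (X - x') (X - x'); set B := edot (Y - ybar) (Y - ybar).
set Ah := edot (X - x') (a - X); set Bg := edot (Y - ybar) (b - Y).
set hh := edot (a - X) (a - X); set gg := edot (b - Y) (b - Y).
move=> Hin.
have H1 : c * p <= e by rewrite mulrC -ler_pdivlMr //; apply: ltW.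
have H2 : c * p ^+ 2 <= e * p by rewrite expr2 mulrA ler_wpM2r.
rewrite hp in H2; move: Hin H2.
have -> : forall u v w : R, c * (u + 2 * v + w) = c * u + 2 * (c * v) + c * w by move=> *; ring.
have -> : forall v : R, 2 * c * v = 2 * (c * v) by move=> *; ring.
have -> : c * (hh + gg) = c * hh + c * gg by ring.
lra.
Qed.

Lemma sq_cvr (R : realType) (f g : nat -> R) :
  (forall k, 0 <= f k) -> (forall k, f k ^+ 2 <= g k) -> cvr g 0 -> cvr f 0.
Proof.
move=> f0 fg H e e0; have [N HN] := H (e ^+ 2) (exprn_gt0 2 e0); exists N => k Nk.
rewrite subr0 ger0_norm //.
have : f k ^+ 2 < e ^+ 2.
  apply: le_lt_trans (fg k) _; apply: le_lt_trans (HN k Nk); rewrite subr0; exact: ler_norm.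
by rewrite ltr_sqr ?nnegrE // ltW.
Qed.

Lemma enorm_le_pl (R : realType) n m (a : 'rV[R]_n) (b : 'rV[R]_m) : enorm a <= pnorm a b.
Proof. by rewrite /enorm /pnorm ler_sqrt ?addr_ge0 ?edot_ge0 // lerDl edot_ge0. Qed.

Lemma enorm_le_pr (R : realType) n m (a : 'rV[R]_n) (b : 'rV[R]_m) : enorm b <= pnorm a b.
Proof. by rewrite /enorm /pnorm ler_sqrt ?addr_ge0 ?edot_ge0 // lerDr edot_ge0. Qed.

Lemma cv_ext (R : realType) p (z w : nat -> 'rV[R]_p) c : (forall k, z k = w k) -> cv w c -> cv z c.
Proof. move=> H Hw e e0; have [N HN] := Hw e e0; exists N => k Nk; rewrite H; exact: HN. Qed.

Lemma cvr_ext (R : realType) (z w : nat -> R) c : (forall k, z k = w k) -> cvr w c -> cvr z c.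
Proof. move=> H Hw e e0; have [N HN] := Hw e e0; exists N => k Nk; rewrite H; exact: HN. Qed.

Lemma cvr_cst_uniq (R : realType) (f : nat -> R) a b : cvr f a -> (forall k, f k = b) -> a = b.
Proof.
move=> H Hb; apply/eqP; rewrite eq_le; apply/andP; split.
- by apply: (cvr_le_lim H) => k; rewrite Hb.
- by apply: (cvr_ge_lim H) => k; rewrite Hb.
Qed.

Lemma shift_incr N : incr (fun j => (j + N)%N).
Proof. by move=> j; rewrite addSn. Qed.

Lemma cv_edot (R : realType) p (z : nat -> 'rV[R]_p) w : cv z w -> cvr (fun j => edot (z j) (z j)) (edot w w).
Proof.
move=> H; rewrite -enorm_sq; apply: (@cvr_ext _ _ (fun j => enorm (z j) * enorm (z j))).
  by move=> k; rewrite -enorm_sq expr2.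
by rewrite expr2; apply: cvrM; apply: cv_enorm.
Qed.

Lemma enorm_tri0 (R : realType) p (a x : 'rV[R]_p) : enorm a <= enorm (a - x) + enorm x.
Proof. by have := enormD3 a x 0; rewrite !subr0. Qed.

Lemma cancel3 (R : realType) (u A B C v D E : R) : u + A + B + C <= v + D + B + E -> u + A + C <= v + D + E.
Proof. lra. Qed.
Lemma cancel_out (R : realType) (u A B C D E : R) : u + A + B + C <= u + D + E + C -> A + B <= D + E.
Proof. lra. Qed.
Lemma tri_half (R : realType) (x y z p e : R) : x <= y + z -> y <= p -> p < e / 2 -> z < e / 2 -> x <= e.
Proof. lra. Qed.
Lemma tri_half2 (R : realType) (x y z e : R) : x <= y + z -> y < e / 2 -> z < e / 2 -> x <= e.
Proof. lra. Qed.

Lemma lam_sq (R : realType) (c b L a t d C1 : R) : 0 < c -> 0 <= b -> c * b ^+ 2 <= L * a ->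
  a <= t + d -> c * d <= C1 -> 0 <= L -> (2 * c * b) ^+ 2 <= 4 * L * (c * t + C1).
Proof.
move=> c0 b0 h1 h2 h3 L0.
have e1 : (2 * c * b) ^+ 2 = 4 * c * (c * b ^+ 2) by ring.
have h4 : 4 * c * (c * b ^+ 2) <= 4 * c * (L * a) by rewrite ler_wpM2l // mulr_ge0 // ltW.
have h5 : L * a <= L * (t + d) by rewrite ler_wpM2l.
have h6 : 4 * c * (L * a) <= 4 * c * (L * (t + d)) by rewrite ler_wpM2l // mulr_ge0 // ltW.
have h7 : L * (c * d) <= L * C1 by rewrite ler_wpM2l.
have e2 : 4 * c * (L * (t + d)) = 4 * L * (c * t) + 4 * (L * (c * d)) by ring.
have e3 : 4 * L * (c * t + C1) = 4 * L * (c * t) + 4 * (L * C1) by ring.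
rewrite e1 e3; apply: le_trans h4 _; apply: le_trans h6 _; rewrite e2; lra.
Qed.

Lemma ct_big (R : realType) (x y L C1 M : R) : 0 < L -> 0 < C1 -> x ^+ 2 <= 4 * L * (y + C1) ->
  1 + 4 * L * (`|M| + C1) < x -> M < y.
Proof.
move=> L0 C0 h1 h2.
have hM := normr_ge0 M.
have x1 : 1 <= x by apply: ltW; apply: le_lt_trans h2; rewrite lerDl mulr_ge0 ?addr_ge0 // ?mulr_ge0 // ltW.
have h3 : x <= x ^+ 2 by rewrite expr2 ler_peMr // (le_trans ler01 x1).
have h4 : 4 * L * (`|M| + C1) < 4 * L * (y + C1) by lra.
have h5 : `|M| + C1 < y + C1 by rewrite -(ltr_pM2l (_ : 0 < 4 * L)) // mulr_gt0.
have := ler_norm M; lra.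
Qed.

Lemma W_bound (R : realType) (c t b L a d C1 : R) : 0 < c -> 0 < t -> 1 <= c * t ->
  c * b ^+ 2 <= L * a -> a <= t + d -> c * d <= C1 -> 0 <= L -> 0 <= b -> 0 <= C1 ->
  b / t * (2 * c * b) <= 2 * L + 2 * L * C1.
Proof.
move=> c0 t0 ct1 h1 h2 h3 L0 b0 C0.
rewrite mulrAC ler_pdivrMr //.
have -> : b * (2 * c * b) = 2 * (c * b ^+ 2) by ring.
have h4 : c * d <= C1 * (c * t) by apply: le_trans h3 _; rewrite ler_peMr.
have h5 : d <= C1 * t by rewrite -(ler_pM2l c0); move: h4; rewrite mulrCA.
have h6 : L * d <= L * (C1 * t) by rewrite ler_wpM2l.
have h7 : L * a <= L * (t + d) by rewrite ler_wpM2l.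
have e2 : (2 * L + 2 * L * C1) * t = 2 * (L * t) + 2 * (L * (C1 * t)) by ring.
have e3 : L * (t + d) = L * t + L * d by ring.
rewrite e2; lra.
Qed.

Lemma vb (R : realType) (c t b L C1 : R) : 0 < c -> 0 < t ->
  (c * b) ^+ 2 <= L * (c * t + C1) -> (b / t) ^+ 2 <= L * (c * t)^-1 + L * C1 * ((c * t)^-1) ^+ 2.
Proof.
move=> c0 t0 h.
have q0 : 0 < c * t by apply: mulr_gt0.
have -> : b / t = (c * b) * (c * t)^-1 by field; rewrite !gt_eqF.
have -> : L * (c * t)^-1 + L * C1 * ((c * t)^-1) ^+ 2 = L * (c * t + C1) * ((c * t)^-1) ^+ 2.
  by field; rewrite !gt_eqF.
rewrite exprMn; apply: ler_wpM2r => //; exact: sqr_ge0.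
Qed.

Lemma phi_crit (R : realType) (pX px' pxb L d C1 c t : R) : 0 < c -> 0 < t ->
  pX - px' <= L * d -> px' <= pxb -> c * d <= C1 -> 0 <= L ->
  pX <= pxb + t * 1 * (L * C1 / (c * t)).
Proof.
move=> c0 t0 h1 h2 h3 L0.
have -> : t * 1 * (L * C1 / (c * t)) = L * (C1 / c) by field; rewrite !gt_eqF.
have h4 : d <= C1 / c by rewrite ler_pdivlMr // mulrC.
have h5 : L * d <= L * (C1 / c) by rewrite ler_wpM2l.
lra.
Qed.

Lemma cb_sq (R : realType) (c b L a t d C1 : R) : 0 < c -> c * b ^+ 2 <= L * a ->
  a <= t + d -> c * d <= C1 -> 0 <= L -> (c * b) ^+ 2 <= L * (c * t + C1).
Proof.
move=> c0 h1 h2 h3 L0.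
have e1 : (c * b) ^+ 2 = c * (c * b ^+ 2) by ring.
have h4 : c * (c * b ^+ 2) <= c * (L * a) by rewrite ler_wpM2l // ltW.
have h5 : L * a <= L * (t + d) by rewrite ler_wpM2l.
have h6 : c * (L * a) <= c * (L * (t + d)) by rewrite ler_wpM2l // ltW.
have h7 : L * (c * d) <= L * C1 by rewrite ler_wpM2l.
have e2 : c * (L * (t + d)) = L * (c * t) + L * (c * d) by ring.
have e3 : L * (c * t + C1) = L * (c * t) + L * C1 by ring.
rewrite e1 e3; apply: le_trans h4 _; apply: le_trans h6 _; rewrite e2; lra.
Qed.

Lemma cancel_mid (R : realType) (u A B C : R) : u + A + B + C <= u + A + 0 + C -> B <= 0.
Proof. lra. Qed.

Theorem corollary5p5 (R : realType) (n m : nat) (phi : 'rV[R]_n -> R)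
  (Phi : 'rV[R]_n -> 'rV[R]_m -> Prop) (xbar : 'rV[R]_n) (ybar : 'rV[R]_m) :
  locally_lipschitz phi ->
  closed_graph Phi ->
  (exists x, Phi x ybar) ->
  local_min_P phi Phi ybar xbar ->
  (forall u : 'rV[R]_n, enorm u = 1 -> critical_direction phi Phi xbar ybar u ->
     asymp_regular Phi xbar ybar u) ->
  exists lam : 'rV[R]_m, exists2 xi : 'rV[R]_n, lim_subdiff phi xbar xi &
    lim_coderiv Phi xbar ybar lam (- xi).
Proof.
move=> Hlip Hcl _ [Pxy [del del0 Hmin]] Hreg.
have [L0 [d0 d00 HL0]] := Hlip xbar.
pose L := `|L0| + 1.
have L0p : 0 < L by rewrite /L; have := normr_ge0 L0; lra.
pose eps := Order.min d0 del / 2.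
have eps0 : 0 < eps by rewrite /eps divr_gt0 // lt_min d00 del0.
have mpos : 0 < Order.min d0 del by rewrite lt_min d00 del0.
have md0 : Order.min d0 del <= d0 by rewrite ge_min lexx.
have mdel : Order.min d0 del <= del by rewrite ge_min lexx orbT.
have epsd0 : eps < d0 by rewrite /eps; lra.
have epsdel : eps < del by rewrite /eps; lra.
have Lip : forall y z, enorm (y - xbar) <= eps -> enorm (z - xbar) <= eps ->
    `|phi y - phi z| <= L * enorm (y - z).
  move=> y z hy hz; apply: le_trans (HL0 y z (le_lt_trans hy epsd0) (le_lt_trans hz epsd0)) _.
  apply: ler_wpM2r; first exact: enorm_ge0.
  rewrite /L; have := ler_norm L0; lra.
have Lip1 : forall y z, enorm (y - xbar) <= eps -> enorm (z - xbar) <= eps ->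
    phi y - phi z <= L * enorm (y - z).
  by move=> y z hy hz; apply: le_trans (Lip y z hy hz); apply: ler_norm.
pose K a b y := [/\ Phi a y, enorm (a - xbar) <= eps, enorm (b - xbar) <= eps & enorm (y - ybar) <= eps].
pose c (k : nat) : R := k.+1%:R.
have c0 : forall k, 0 < c k by move=> k; rewrite /c ltr0n.
pose F k a b y := phi b + c k * edot (a - b) (a - b) + c k * edot (y - ybar) (y - ybar)
                  + edot (b - xbar) (b - xbar).
have Kbar : K xbar xbar ybar by split => //; rewrite subrr enorm0 ltW.
have Hex : forall k, exists p : 'rV[R]_n * 'rV[R]_n * 'rV[R]_m,
    K p.1.1 p.1.2 p.2 /\ forall a b y, K a b y -> F k p.1.1 p.1.2 p.2 <= F k a b y.
  move=> k.
  have KB : forall a b y, K a b y ->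
      [/\ enorm a <= enorm xbar + enorm ybar + eps, enorm b <= enorm xbar + enorm ybar + eps
        & enorm y <= enorm xbar + enorm ybar + eps].
    move=> a b y [_ ha hb hy]; have := enorm_tri0 a xbar; have := enorm_tri0 b xbar.
    have := enorm_tri0 y ybar; have := enorm_ge0 xbar; have := enorm_ge0 ybar.
    by split; lra.
  have Glb : forall a b y, K a b y -> phi xbar - L * eps <= F k a b y.
    move=> a b y [_ ha hb hy]; rewrite /F.
    have := Lip1 xbar b; rewrite subrr enorm0 => /(_ (ltW eps0) hb).
    rewrite enormB => h1.
    have h2 : L * enorm (b - xbar) <= L * eps by rewrite ler_wpM2l // ltW.
    have := mulr_ge0 (ltW (c0 k)) (edot_ge0 (a - b)).
    have := mulr_ge0 (ltW (c0 k)) (edot_ge0 (y - ybar)).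
    have := edot_ge0 (b - xbar).
    lra.
  have Kcl : forall xa xb xc a b y, (forall k, K (xa k) (xb k) (xc k)) -> cv xa a -> cv xb b -> cv xc y ->
     K a b y /\ cvr (fun j => F k (xa j) (xb j) (xc j)) (F k a b y).
    move=> xa xb xc a b y HK Ha Hb Hc.
    have Hna : cvr (fun j => enorm (xa j - xbar)) (enorm (a - xbar)) by apply: cv_enorm; apply: cvD Ha (cv_const _).
    have Hnb : cvr (fun j => enorm (xb j - xbar)) (enorm (b - xbar)) by apply: cv_enorm; apply: cvD Hb (cv_const _).
    have Hnc : cvr (fun j => enorm (xc j - ybar)) (enorm (y - ybar)) by apply: cv_enorm; apply: cvD Hc (cv_const _).
    have hb : enorm (b - xbar) <= eps by apply: (cvr_le_lim Hnb) => j; case: (HK j).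
    split.
      split.
      + by apply: (closed_seq Hcl) Ha Hc => j; case: (HK j).
      + by apply: (cvr_le_lim Hna) => j; case: (HK j).
      + exact: hb.
      + by apply: (cvr_le_lim Hnc) => j; case: (HK j).
    rewrite /F; apply: cvrD; [apply: cvrD; [apply: cvrD|]|].
    + apply: (@cvr_le _ _ _ (fun j => L * enorm (xb j - b))).
        by rewrite -(mulr0 L); apply: cvrM; [apply: cvr_const | apply: cv_cvr].
      by move=> j; apply: Lip => //; case: (HK j).
    + apply: cvrM; first exact: cvr_const.
      by apply: cv_edot; apply: cvD Ha (cvN Hb).
    + apply: cvrM; first exact: cvr_const.
      by apply: cv_edot; apply: cvD Hc (cv_const _).
    + by apply: cv_edot; apply: cvD Hb (cv_const _).
  have [a [b [y [Kaby Hm]]]] := exist_min Kbar KB Glb Kcl.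
  by exists (a, b, y).
pose P k := sval (cid (Hex k)).
pose X k := (P k).1.1. pose X' k := (P k).1.2. pose Y k := (P k).2.
have KP : forall k, K (X k) (X' k) (Y k) by move=> k; case: (svalP (cid (Hex k))).
have MP : forall k a b y, K a b y -> F k (X k) (X' k) (Y k) <= F k a b y.
  by move=> k; case: (svalP (cid (Hex k))).
pose d k := enorm (X k - X' k). pose a k := enorm (X' k - xbar).
pose t k := enorm (X k - xbar). pose b k := enorm (Y k - ybar).
have d0' : forall k, 0 <= d k by move=> k; apply: enorm_ge0.
have a0 : forall k, 0 <= a k by move=> k; apply: enorm_ge0.
have t0 : forall k, 0 <= t k by move=> k; apply: enorm_ge0.
have b0 : forall k, 0 <= b k by move=> k; apply: enorm_ge0.
have aeps : forall k, a k <= eps by move=> k; case: (KP k).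
have teps : forall k, t k <= eps by move=> k; case: (KP k).
have beps : forall k, b k <= eps by move=> k; case: (KP k).
have FE : forall k, F k (X k) (X' k) (Y k) = phi (X' k) + c k * d k ^+ 2 + c k * b k ^+ 2 + a k ^+ 2.
  by move=> k; rewrite /F /d /b /a !enorm_sq.
have V1 : forall k, phi (X' k) + c k * d k ^+ 2 + c k * b k ^+ 2 + a k ^+ 2 <= phi xbar.
  move=> k; rewrite -FE; apply: le_trans (MP k _ _ _ Kbar) _.
  by rewrite /F !subrr !edot0l !mulr0 !addr0.
pose C1 := L + 2 * eps.
have C10 : 0 < C1 by rewrite /C1; lra.
have V2 : forall k, c k * d k <= C1.
  move=> k.
  have KX : K (X k) (X k) (Y k) by case: (KP k) => *; split.
  have := MP k _ _ _ KX; rewrite FE /F subrr edot0l mulr0 addr0 -!enorm_sq -/(b k) -/(t k).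
  have h1 : phi (X k) - phi (X' k) <= L * d k by apply: Lip1; case: (KP k).
  have h2 : `|t k - a k| <= d k.
    by have := enorm_rev (X k - xbar) (X' k - xbar); rewrite opprB addrA (subrK xbar).
  have h3 : t k ^+ 2 - a k ^+ 2 <= d k * (2 * eps).
    rewrite subr_sqr; apply: le_trans (_ : d k * (t k + a k) <= _).
      apply: ler_wpM2r; first exact: addr_ge0. apply: le_trans h2; exact: ler_norm.
    by apply: ler_wpM2l => //; have := aeps k; have := teps k; lra.
  move=> h.
  have h4 : c k * d k ^+ 2 <= C1 * d k.
    rewrite /C1 mulrDl; move: h h1 h3; set u := phi (X' k); set v := phi (X k).
    set w := c k * b k ^+ 2; set z := c k * d k ^+ 2; set q := L * d k.
    rewrite (mulrC (2 * eps)); lra.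
  have [dz|dp] := eqVneq (d k) 0; first by rewrite dz mulr0 ltW.
  have dpos : 0 < d k by rewrite lt_neqAle eq_sym dp d0'.
  by rewrite -(ler_pM2r dpos) -mulrA -expr2.
pose Xi k := (2 * c k) *: (X k - X' k) - 2 *: (X' k - xbar).
pose XS k := - ((2 * c k) *: (X k - X' k)).
pose Lam k := (2 * c k) *: (Y k - ybar).
have XSE : forall k, XS k = - Xi k - 2 *: (X' k - xbar).
  by move=> k; apply/rowP => i; rewrite !mxE; ring.
have XiB : forall k, enorm (Xi k) <= 2 * C1 + 2 * eps.
  move=> k; apply: le_trans (enormD _ _) _; rewrite enormN !enormZ.
  rewrite (ger0_norm (ltW (mulr_gt0 (ltr0n _ 2) (c0 k)))) ger0_norm // -/(d k) -/(a k).
  have := V2 k; have := aeps k; lra.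
have phiX' : forall k, phi (X' k) <= phi xbar.
  move=> k; apply: le_trans (V1 k); have := mulr_ge0 (ltW (c0 k)) (sqr_ge0 (d k)).
  have := mulr_ge0 (ltW (c0 k)) (sqr_ge0 (b k)); have := sqr_ge0 (a k); lra.
have cb : forall k, c k * b k ^+ 2 <= L * a k.
  move=> k; have := Lip1 xbar (X' k); rewrite subrr enorm0 => /(_ (ltW eps0)).
  case: (KP k) => _ _ ha _ /(_ ha); rewrite enormB -/(a k) => h.
  have := V1 k; have := mulr_ge0 (ltW (c0 k)) (sqr_ge0 (d k)); have := sqr_ge0 (a k); lra.
have XB : forall k, enorm (X k) <= enorm xbar + eps.
  by move=> k; apply: le_trans (enorm_tri0 _ xbar) _; have := teps k; rewrite /t; lra.
have [s1 [xt [Is1 HXt]]] := BW XB.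
have [s2 [xi [Is2 HXi]]] := BW (fun j => XiB (s1 j)).
pose s j := s1 (s2 j).
have Is : incr s by apply: incr_comp.
have HX : cv (fun j => X (s j)) xt := cv_sub HXt Is2.
have hd : cvr (fun j => d (s j)) 0.
  apply: (cvr_le (cvr_natinv C1 Is)) => j; rewrite subr0 ger0_norm //.
  by rewrite -/(c (s j)) (ler_pdivlMr _ _ (c0 _)) mulrC; apply: V2.
have hb : cvr (fun j => b (s j)) 0.
  apply: (sq_cvr (fun j => b0 (s j)) _ (cvr_natinv (L * eps) Is)) => j.
  rewrite -/(c (s j)) (ler_pdivlMr _ _ (c0 _)) mulrC; apply: le_trans (cb _) _.
  by apply: ler_wpM2l; [apply: ltW|apply: aeps].
have HY : cv (fun j => Y (s j)) ybar by apply: (cv_le hb) => j.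
have HX' : cv (fun j => X' (s j)) xt.
  apply: (cv_le (g := fun j => enorm (X (s j) - xt) + d (s j))).
    by rewrite -(addr0 0); apply: cvrD; [apply: cv_cvr|].
  move=> j; have e1 : enorm (X' (s j) - X (s j)) = d (s j) by rewrite /d enormB.
  by have := enormD3 (X' (s j)) (X (s j)) xt; rewrite e1; lra.
have Pxt : Phi xt ybar by apply: (closed_seq Hcl) HX HY => j; case: (KP (s j)).
have xteps : enorm (xt - xbar) <= eps.
  apply: (cvr_le_lim (cv_enorm (cvD HX (cv_const (- xbar))))) => j; exact: teps.
have phixt : phi xbar <= phi xt by apply: Hmin => //; apply: le_lt_trans xteps epsdel.
have ha : cvr (fun j => a (s j)) 0.
  apply: (sq_cvr (fun j => a0 (s j)) (g := fun j => L * enorm (X' (s j) - xt))).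
    move=> j; have := V1 (s j); have := Lip1 xt (X' (s j)) xteps (aeps _).
    rewrite enormB; have := mulr_ge0 (ltW (c0 (s j))) (sqr_ge0 (d (s j))).
    have := mulr_ge0 (ltW (c0 (s j))) (sqr_ge0 (b (s j))); lra.
  by rewrite -(mulr0 L); apply: cvrM; [apply: cvr_const|apply: cv_cvr].
have HX'0 : cv (fun j => X' (s j)) xbar by apply: (cv_le ha).
have HX0 : cv (fun j => X (s j)) xbar.
  apply: (cv_le (g := fun j => d (s j) + a (s j))); first by rewrite -(addr0 0); apply: cvrD.
  by move=> j; apply: enormD3.
have e20 : 0 < eps / 2 by apply: divr_gt0.
have [Na HNa] := ha _ e20.
have [Nt HNt] := cv_cvr HX0 e20.
have [Nb HNb] := hb _ e20.
pose N0 := maxn (maxn Na Nt) Nb.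
have Int : forall j, (N0 <= j)%N -> [/\ a (s j) < eps / 2, t (s j) < eps / 2 & b (s j) < eps / 2].
  move=> j; rewrite !geq_max => /andP[/andP[h1 h2] h3].
  have := HNa j h1; have := HNt j h2; have := HNb j h3.
  by rewrite !subr0 !ger0_norm ?enorm_ge0 //.
have SubD : forall k, a k < eps / 2 -> reg_subdiff phi (X' k) (Xi k).
  move=> k hak; apply: (L1 (c0 k) e20) => z hz.
  have Kz : K (X k) z (Y k).
    case: (KP k) => h1 h2 h3 h4; split => //.
    by apply: (tri_half2 (enormD3 z (X' k) xbar)).
  by apply: cancel3; apply: (MP k _ _ _ Kz).
have NorD : forall k, t k < eps / 2 -> b k < eps / 2 ->
    reg_normal_gph Phi (X k) (Y k) (XS k) (- Lam k).
  move=> k htk hbk; case: (KP k) => PXY _ _ _.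
  apply: (L2 (c0 k) e20 PXY) => a' b' Pab hp.
  have K' : K a' (X' k) b'.
    case: (KP k) => h1 h2 h3 h4; split => //.
    + exact: (tri_half (enormD3 a' (X k) xbar) (enorm_le_pl (a' - X k) (b' - Y k)) hp htk).
    + exact: (tri_half (enormD3 b' (Y k) ybar) (enorm_le_pr (a' - X k) (b' - Y k)) hp hbk).
  have := MP k _ _ _ K'; rewrite /F; exact: cancel_out.
have LS : lim_subdiff phi xbar xi.
  exists (fun j => X' (s (j + N0)%N)), (fun j => Xi (s (j + N0)%N)); split.
  - by apply/cvP; apply: (cv_sub HX'0 (shift_incr N0)).
  - apply/cvrP; apply: (cvr_le (g := fun j => L * a (s (j + N0)%N))).
      rewrite -(mulr0 L); apply: cvrM; first exact: cvr_const.
      exact: (cvr_sub ha (shift_incr N0)).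
    by move=> j; apply: Lip => //; [apply: aeps|rewrite subrr enorm0 ltW].
  - by apply/cvP; apply: (cv_sub HXi (shift_incr N0)).
  - move=> j; apply: SubD; case: (Int (j + N0)%N) => //; exact: leq_addl.
have XSlim : forall r, incr r -> cv (fun i => XS (s (r i))) (- xi).
  move=> r Ir.
  have H := cvD (cvN (cv_sub HXi Ir)) (cvN (cvZ 2 (cvD (cv_sub HX'0 Ir) (cv_const (- xbar))))).
  rewrite subrr scaler0 oppr0 addr0 in H.
  by apply: cv_ext H => i; rewrite XSE.
have [[M HM]|HUb] := pselect (exists M, forall N, exists j, (N <= j)%N /\ enorm (Lam (s j)) <= M).
  have HP : forall (i N : nat), exists j, (N <= j)%N /\ ((N0 <= j)%N /\ enorm (Lam (s j)) <= M).
    move=> _ N; have [j [hj hM]] := HM (maxn N N0); exists j.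
    by move: hj; rewrite geq_max => /andP[h1 h2].
  have [s3 [Is3 Hs3]] := extract HP.
  have [s4 [lam [Is4 HL]]] := BW (fun i => (Hs3 i).2).
  have Ir : incr (fun i => s3 (s4 i)) by apply: incr_comp.
  exists lam, xi => //.
  exists (fun i => X (s (s3 (s4 i)))), (fun i => Y (s (s3 (s4 i)))),
    (fun i => XS (s (s3 (s4 i)))), (fun i => - Lam (s (s3 (s4 i)))); split.
  - by apply/cvP; apply: (cv_sub HX0 Ir).
  - by apply/cvP; apply: (cv_sub HY Ir).
  - by apply/cvP; apply: XSlim.
  - by apply/cvP; apply: cvN.
  - move=> i; case: (Int (s3 (s4 i))); first by case: (Hs3 (s4 i)).
    by move=> _ h1 h2; apply: NorD.
have HU : forall M, exists N, forall j, (N <= j)%N -> M < enorm (Lam (s j)).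
  move=> M; apply: contrapT => hn; apply: HUb; exists M => N.
  apply: contrapT => hn2; apply: hn; exists N => j hj.
  by rewrite ltNge; apply/negP => hle; apply: hn2; exists j; split.
have LamE : forall k, enorm (Lam k) = 2 * c k * b k.
  by move=> k; rewrite enormZ ger0_norm // mulr_ge0 // ltW.
have adt : forall k, a k <= t k + d k.
  move=> k; have e1 : enorm (X' k - X k) = d k by rewrite /d enormB.
  have := enormD3 (X' k) (X k) xbar; rewrite e1 => h; rewrite addrC; exact: h.
have LamSq : forall k, enorm (Lam k) ^+ 2 <= 4 * L * (c k * t k + C1).
  by move=> k; rewrite LamE; apply: lam_sq (c0 k) (b0 k) (cb k) (adt k) (V2 k) (ltW L0p).
have CTbig : forall k (MM : R), 1 + 4 * L * (`|MM| + C1) < enorm (Lam k) -> MM < c k * t k.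
  by move=> k MM h; apply: (ct_big L0p C10 (LamSq k) h).
have [N1 HN1] := HU (1 + 4 * L * (`|1 : R| + C1)).
pose NN := maxn N0 N1.
have hct : forall j, (NN <= j)%N -> 1 < c (s j) * t (s j).
  move=> j; rewrite geq_max => /andP[_ h]; exact: CTbig (HN1 j h).
have tpos : forall j, (NN <= j)%N -> 0 < t (s j).
  move=> j hj; have := hct j hj => h.
  by rewrite -(pmulr_rgt0 _ (c0 (s j))); apply: lt_trans h.
have bpos : forall j, (NN <= j)%N -> 0 < b (s j).
  move=> j; rewrite geq_max => /andP[_ h]; have := HN1 j h; rewrite LamE => h2.
  have hM : 0 <= 4 * L * (`|1 : R| + C1).
    by apply: mulr_ge0; [apply: mulr_ge0; [|apply: ltW]|apply: addr_ge0; [|apply: ltW]].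
  rewrite lt_neqAle b0 andbT; apply/eqP => hb0; rewrite -hb0 mulr0 in h2.
  move: h2 hM; set q := 4 * L * (`|1 : R| + C1); lra.
have hInt : forall j, (NN <= j)%N -> [/\ a (s j) < eps / 2, t (s j) < eps / 2 & b (s j) < eps / 2].
  by move=> j; rewrite geq_max => /andP[h _]; apply: Int.
pose U k := (t k)^-1 *: (X k - xbar).
pose V k := (t k)^-1 *: (Y k - ybar).
pose W k := (b k / t k) *: Lam k.
have UE : forall k, 0 < t k -> enorm (U k) = 1.
  by move=> k tk; rewrite /U enormZ ger0_norm ?invr_ge0 ?ltW // -/(t k) mulVf ?gt_eqF.
have WB : forall j, (NN <= j)%N -> enorm (W (s j)) <= 2 * L + 2 * L * C1.
  move=> j hj; rewrite /W enormZ ger0_norm ?divr_ge0 // LamE.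
  apply: W_bound (c0 _) (tpos j hj) (ltW (hct j hj)) (cb _) (adt _) (V2 _) (ltW L0p) (b0 _) (ltW C10).
have UB : forall j, enorm (U (s (j + NN)%N)) <= 1.
  by move=> j; rewrite UE //; apply: tpos; exact: leq_addl.
have [s5 [u [Is5 HUc]]] := BW UB.
have [s6 [w [Is6 HWc]]] := BW (fun j => WB (s5 j + NN)%N (leq_addl _ _)).
pose r i := (s5 (s6 i) + NN)%N.
have Ir : incr r by apply: (incr_comp (shift_incr NN)); apply: incr_comp.
have hr : forall i, (NN <= r i)%N by move=> i; exact: leq_addl.
have hri : forall i, (i <= r i)%N by move=> i; exact: incr_ge.
have HUt : cv (fun i => U (s (r i))) u := cv_sub HUc Is6.
have HWt : cv (fun i => W (s (r i))) w := HWc.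
have uE : enorm u = 1.
  by apply: (cvr_cst_uniq (cv_enorm HUt)) => i; apply: UE; apply: tpos.
have CTt : forall M, exists N, forall i, (N <= i)%N -> M < c (s (r i)) * t (s (r i)).
  move=> M; have [N HN] := HU (1 + 4 * L * (`|M| + C1)); exists N => i hi.
  by apply: CTbig; apply: HN; apply: leq_trans hi (hri i).
have Hinv := cvr_inv CTt.
have HVt : cv (fun i => V (s (r i))) 0.
  have g0 : cvr (fun i => L * (c (s (r i)) * t (s (r i)))^-1 +
      L * C1 * ((c (s (r i)) * t (s (r i)))^-1 * (c (s (r i)) * t (s (r i)))^-1)) 0.
    have := cvrD (cvrM (cvr_const L) Hinv) (cvrM (cvr_const (L * C1)) (cvrM Hinv Hinv)).
    by rewrite !mulr0 addr0.
  apply: (cv_le (g := fun i => b (s (r i)) / t (s (r i)))).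
    apply: (sq_cvr _ _ g0) => i.
      by apply: divr_ge0.
    rewrite -expr2; apply: vb (c0 _) (tpos _ (hr i)) _.
    exact: cb_sq (c0 _) (cb _) (adt _) (V2 _) (ltW L0p).
  by move=> i; rewrite subr0 /V enormZ ger0_norm ?invr_ge0 // mulrC.
have XE : forall k, 0 < t k -> xbar + t k *: U k = X k.
  by move=> k tk; rewrite /U scalerA mulfV ?gt_eqF // scale1r addrC (subrK xbar).
have YE : forall k, 0 < t k -> ybar + (t k * enorm (U k)) *: V k = Y k.
  by move=> k tk; rewrite UE // mulr1 /V scalerA mulfV ?gt_eqF // scale1r addrC (subrK ybar).
have crit : critical_direction phi Phi xbar ybar u.
  exists (fun i => U (s (r i))), (fun i => L * C1 / (c (s (r i)) * t (s (r i)))),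
    (fun i => V (s (r i))), (fun i => t (s (r i))).
  split; [split|split].
  - by apply/cvP.
  - apply/cvrP; have := cvrM (cvr_const (L * C1)) Hinv; rewrite mulr0; exact.
  - by apply/cvP.
  - split; last by move=> i; apply: tpos.
    by apply/cvrP; apply: (cv_cvr (cv_sub HX0 Ir)).
  - move=> i; rewrite XE ?tpos // UE ?tpos //.
    apply: phi_crit (c0 _) (tpos _ (hr i)) _ (phiX' _) (V2 _) (ltW L0p).
    by apply: Lip1; case: (KP (s (r i))).
  - by move=> i; rewrite XE ?tpos // YE ?tpos //; case: (KP (s (r i))).
have HA := Hreg u uE crit.
have [lam Hlam] : exists lam0 : 'rV[R]_m, lim_coderiv Phi xbar ybar lam0 (- xi).
apply: (HA (fun i => X (s (r i))) (fun i => Y (s (r i))) (fun i => XS (s (r i)))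
  (fun i => Lam (s (r i))) (- xi) w).
- by move=> i; case: (KP (s (r i))).
- move=> i HP.
  have Kb : K (X (s (r i))) (X' (s (r i))) ybar.
    case: (KP (s (r i))) => *; split => //; by rewrite subrr enorm0 ltW.
  have := MP (s (r i)) _ _ _ Kb; rewrite /F subrr edot0l mulr0 => /cancel_mid.
  rewrite -enorm_sq -/(b (s (r i))) => h.
  have := mulr_gt0 (c0 (s (r i))) (exprn_gt0 2 (bpos _ (hr i))).
  by rewrite ltNge h.
- move=> i E; have := bpos _ (hr i); rewrite /b E subrr enorm0 ltxx //.
- move=> i; case: (hInt _ (hr i)) => _ h1 h2; exact: NorD.
- by apply/cvP; apply: (cv_sub HX0 Ir).
- by apply/cvP; apply: (cv_sub HY Ir).
- by apply/cvP; apply: XSlim.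
- by apply/cvP.
- by apply/cvP.
- by apply/cvP.
- apply/cvyP => MM; have [N HN] := HU MM; exists N => i hi.
  by apply: HN; apply: leq_trans hi (hri i).
- apply/cvP; apply: (cv_ext _ (cv_const 0)) => i.
  have bp := bpos _ (hr i); have cp := c0 (s (r i)).
  rewrite LamE /Lam scalerA -/(b (s (r i))).
  have -> : (2 * c (s (r i)) * b (s (r i)))^-1 * (2 * c (s (r i))) = (b (s (r i)))^-1.
    by field; rewrite !gt_eqF.
  by rewrite subrr.
exists lam, xi => //.
Qed.
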